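(* Let $X$ be a complex Banach space with $\dim X\geq2$, let $\mathcal{A}\subseteq\mathcal{B}(X)$ be a standard operator algebra, let $r,s$ be nonnegative integers with $r+s\geq1$, and let $A\in\mathcal{A}$ be nonzero. The following are equivalent: (1) $A$ has rank one; (2) for every $B\in\mathcal{A}$, $\sigma_\pi(B^rAB^s)$ is a singleton; (3) for every $B\in\mathcal{A}$ with $\operatorname{rank}(B)\leq2$, $\sigma_\pi(B^rAB^s)$ is a singleton.
   Context: A standard operator algebra on a complex Banach space $X$ is a subalgebra of $\mathcal{B}(X)$ containing all finite rank operators; it need not be closed or unital. The peripheral spectrum of $T\in\mathcal{B}(X)$ is $\sigma_\pi(T)=\{z\in\sigma(T):|z|=r(T)\}$, where $\sigma(T)$ is the spectrum and $r(T)$ the spectral radius. *)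

(* Defs.v *)
From Stdlib Require Import Reals.
Open Scope R_scope.

Record C := mkC { Re : R ; Im : R }.
Definition C0 : C := mkC 0 0.
Definition C1 : C := mkC 1 0.
Definition Cadd (a b : C) : C := mkC (Re a + Re b) (Im a + Im b).
Definition Copp (a : C) : C := mkC (- Re a) (- Im a).
Definition Cmul (a b : C) : C :=
  mkC (Re a * Re b - Im a * Im b) (Re a * Im b + Im a * Re b).
Definition Cabs (a : C) : R := sqrt (Re a * Re a + Im a * Im a).

Record CBanach := {
  car :> Type;
  vzero : car;
  vadd : car -> car -> car;
  vopp : car -> car;
  vscal : C -> car -> car;
  vnorm : car -> R;
  vadd_assoc : forall x y z, vadd x (vadd y z) = vadd (vadd x y) z;
  vadd_comm : forall x y, vadd x y = vadd y x;
  vadd_0 : forall x, vadd x vzero = x;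
  vadd_opp : forall x, vadd x (vopp x) = vzero;
  vscal_1 : forall x, vscal C1 x = x;
  vscal_assoc : forall a b x, vscal a (vscal b x) = vscal (Cmul a b) x;
  vscal_addv : forall a x y, vscal a (vadd x y) = vadd (vscal a x) (vscal a y);
  vscal_adds : forall a b x, vscal (Cadd a b) x = vadd (vscal a x) (vscal b x);
  vnorm_nonneg : forall x, 0 <= vnorm x;
  vnorm_eq0 : forall x, vnorm x = 0 -> x = vzero;
  vnorm_scal : forall a x, vnorm (vscal a x) = Cabs a * vnorm x;
  vnorm_triangle : forall x y, vnorm (vadd x y) <= vnorm x + vnorm y;
  vcomplete : forall u : nat -> car,
    (forall eps, 0 < eps -> exists N, forall m n, (N <= m)%nat -> (N <= n)%nat ->
        vnorm (vadd (u m) (vopp (u n))) < eps) ->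
    exists l, forall eps, 0 < eps -> exists N, forall n, (N <= n)%nat ->
        vnorm (vadd (u n) (vopp l)) < eps
}.

Section Ops.
Variable X : CBanach.

Definition dim_ge2 : Prop :=
  exists x y : X, forall a b : C,
    vadd X (vscal X a x) (vscal X b y) = vzero X -> a = C0 /\ b = C0.

Definition op := X -> X.

Definition linear (T : op) : Prop :=
  (forall x y, T (vadd X x y) = vadd X (T x) (T y)) /\
  (forall a x, T (vscal X a x) = vscal X a (T x)).

Definition bounded_op (T : op) : Prop :=
  linear T /\ exists M : R, forall x, vnorm X (T x) <= M * vnorm X x.

Definition op_add (S T : op) : op := fun x => vadd X (S x) (T x).
Definition op_scal (a : C) (T : op) : op := fun x => vscal X a (T x).
Definition op_comp (S T : op) : op := fun x => S (T x).
Definition op_id : op := fun x => x.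
Definition op_pow (T : op) (n : nat) : op := fun x => Nat.iter n T x.

Fixpoint in_span (ys : list X) (v : X) : Prop :=
  match ys with
  | nil => v = vzero X
  | cons y ys' => exists a : C, exists w, in_span ys' w /\ v = vadd X (vscal X a y) w
  end.

Definition rank_le (n : nat) (T : op) : Prop :=
  exists ys : list X, length ys = n /\ forall x, in_span ys (T x).

Definition op_nonzero (T : op) : Prop := exists x, T x <> vzero X.

Definition rank_one (T : op) : Prop := rank_le 1 T /\ op_nonzero T.

Definition finite_rank (T : op) : Prop := bounded_op T /\ exists n, rank_le n T.

(* standard operator algebra: a (not necessarily closed or unital)
   complex subalgebra of B(X) containing all finite rank operators *)
Definition standard_operator_algebra (A : op -> Prop) : Prop :=
  (forall T, A T -> bounded_op T) /\
  (forall S T, A S -> A T -> A (op_add S T)) /\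
  (forall a T, A T -> A (op_scal a T)) /\
  (forall S T, A S -> A T -> A (op_comp S T)) /\
  (forall T, finite_rank T -> A T).

Definition invertible (T : op) : Prop :=
  exists S, bounded_op S /\ (forall x, S (T x) = x) /\ (forall x, T (S x) = x).

Definition spectrum (T : op) (lam : C) : Prop :=
  ~ invertible (fun x => vadd X (vscal X lam x) (vopp X (T x))).

Definition is_spectral_radius (T : op) (rho : R) : Prop :=
  is_lub (fun t => exists lam, spectrum T lam /\ t = Cabs lam) rho.

Definition peripheral_spectrum (T : op) (z : C) : Prop :=
  spectrum T z /\ is_spectral_radius T (Cabs z).

Definition is_singleton (P : C -> Prop) : Prop :=
  exists z, forall w, P w <-> w = z.

End Ops.

(* Main.v *)
Require Import Defs.
From Stdlib Require Import Reals.
From Stdlib Require Import Lra Lia Field Ring List Classical ClassicalEpsilon FunctionalExtensionality PropExtensionality.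
Open Scope R_scope.
Local Notation C := Defs.C.
Local Notation C0 := Defs.C0.
Local Notation C1 := Defs.C1.
Local Notation Cadd := Defs.Cadd.
Local Notation Copp := Defs.Copp.
Local Notation Cmul := Defs.Cmul.
Local Notation Cabs := Defs.Cabs.
Local Notation Re := Defs.Re.
Local Notation Im := Defs.Im.
Local Notation mkC := Defs.mkC.
Local Notation linear := Defs.linear.

Lemma C_ext (a b : C) : Re a = Re b -> Im a = Im b -> a = b.
Proof. destruct a, b; simpl; intros; subst; reflexivity. Qed.

Definition Csub (a b : C) : C := Cadd a (Copp b).
Definition Cnorm2 (a : C) : R := Re a * Re a + Im a * Im a.
Definition Cinv (a : C) : C := mkC (Re a / Cnorm2 a) (- Im a / Cnorm2 a).
Definition Cdiv (a b : C) : C := Cmul a (Cinv b).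

Lemma Cring : ring_theory C0 C1 Cadd Cmul Csub Copp (@eq C).
Proof.
  constructor; intros; apply C_ext; destruct x; try destruct y; try destruct z;
  unfold C0, C1, Cadd, Cmul, Csub, Copp; simpl; ring.
Qed.

Lemma Cnorm2_pos (a : C) : a <> C0 -> Cnorm2 a <> 0.
Proof.
  intros H E. apply H. destruct a as [x y]; unfold Cnorm2 in E; simpl in E.
  assert (x = 0) by nra. assert (y = 0) by nra. subst. reflexivity.
Qed.

Lemma Cfield : field_theory C0 C1 Cadd Cmul Csub Copp Cdiv Cinv (@eq C).
Proof.
  constructor.
  - exact Cring.
  - intro H. injection H. lra.
  - reflexivity.
  - intros p Hp. apply Cnorm2_pos in Hp. apply C_ext; destruct p as [x y];
    unfold Cmul, Cinv, C1, Cnorm2 in *; simpl in *; field; auto.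
Qed.

Add Field Cfieldi : Cfield.

Lemma C1_neq_C0 : C1 <> C0.
Proof. intro H; injection H; lra. Qed.

Lemma Cabs_nonneg a : 0 <= Cabs a.
Proof. unfold Cabs; apply sqrt_pos. Qed.

Lemma Cabs_sq a : Cabs a * Cabs a = Cnorm2 a.
Proof. unfold Cabs, Cnorm2. rewrite sqrt_sqrt; nra. Qed.

Lemma Cnorm2_mul a b : Cnorm2 (Cmul a b) = Cnorm2 a * Cnorm2 b.
Proof. destruct a, b; unfold Cnorm2, Cmul; simpl; ring. Qed.

Lemma Cabs_mul a b : Cabs (Cmul a b) = Cabs a * Cabs b.
Proof.
  unfold Cabs. rewrite <- sqrt_mult_alt.
  - f_equal. apply (Cnorm2_mul a b).
  - nra.
Qed.

Lemma Cabs_C0 : Cabs C0 = 0.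
Proof. unfold Cabs, C0; simpl. replace (0*0+0*0) with 0 by ring. apply sqrt_0. Qed.

Lemma Cabs_eq0 a : Cabs a = 0 -> a = C0.
Proof.
  intro H. unfold Cabs in H. apply sqrt_eq_0 in H; [|nra].
  destruct a as [x y]; simpl in H. assert (x=0) by nra. assert (y=0) by nra.
  subst; reflexivity.
Qed.

Lemma Cabs_real t : Cabs (mkC t 0) = Rabs t.
Proof.
  unfold Cabs; simpl. replace (t*t+0*0) with (t*t) by ring.
  rewrite <- Rsqr_def. apply sqrt_Rsqr_abs.
Qed.

Lemma Cabs_opp a : Cabs (Copp a) = Cabs a.
Proof. unfold Cabs, Copp; simpl. f_equal; ring. Qed.

Lemma Cabs_add a b : Cabs (Cadd a b) <= Cabs a + Cabs b.
Proof.
  assert (Ha := Cabs_nonneg a). assert (Hb := Cabs_nonneg b).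
  apply Rsqr_incr_0_var; [| nra].
  unfold Rsqr. rewrite Cabs_sq.
  replace ((Cabs a + Cabs b) * (Cabs a + Cabs b)) with
     (Cabs a * Cabs a + Cabs b * Cabs b + 2 * (Cabs a * Cabs b)) by ring.
  rewrite !Cabs_sq.
  destruct a as [x y], b as [u v]; unfold Cnorm2, Cadd; simpl.
  assert (x*u + y*v <= Cabs (mkC x y) * Cabs (mkC u v)).
  { rewrite <- Cabs_mul. unfold Cabs, Cmul; simpl.
    destruct (Rle_dec (x*u+y*v) 0). { apply Rle_trans with 0; auto. apply sqrt_pos. }
    apply Rsqr_incr_0_var; [| apply sqrt_pos]. unfold Rsqr. rewrite sqrt_sqrt; [|nra].
    assert (H0 := Rle_0_sqr (x*v - y*u)); unfold Rsqr in H0.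
    replace ((x * u - y * v) * (x * u - y * v) + (x * v + y * u) * (x * v + y * u))
      with ((x*u+y*v)*(x*u+y*v) + (x*v - y*u)*(x*v-y*u)) by ring. lra. }
  set (p := Cabs (mkC x y) * Cabs (mkC u v)) in *. simpl. nra.
Qed.

Lemma Cabs_re a : Rabs (Re a) <= Cabs a.
Proof.
  unfold Cabs. rewrite <- sqrt_Rsqr_abs. apply sqrt_le_1_alt.
  pose proof (Rle_0_sqr (Im a)); unfold Rsqr in *; lra.
Qed.
Lemma Cabs_im a : Rabs (Im a) <= Cabs a.
Proof.
  unfold Cabs. rewrite <- sqrt_Rsqr_abs. apply sqrt_le_1_alt.
  pose proof (Rle_0_sqr (Re a)); unfold Rsqr in *; lra.
Qed.
Lemma Cabs_le_re_im a : Cabs a <= Rabs (Re a) + Rabs (Im a).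
Proof.
  destruct a as [x y]; simpl.
  replace (mkC x y) with (Cadd (mkC x 0) (mkC 0 y)) by (apply C_ext; simpl; ring).
  eapply Rle_trans. apply Cabs_add. rewrite Cabs_real.
  unfold Cabs at 1; simpl. replace (0*0 + y * y) with (y * y) by ring.
  rewrite <- Rsqr_def, sqrt_Rsqr_abs. lra.
Qed.

Lemma Cmul_eq0 a b : Cmul a b = C0 -> a = C0 \/ b = C0.
Proof.
  intro H. destruct (Classical_Prop.classic (a = C0)) as [|Ha]; [left; auto|right].
  replace b with (Cmul (Cinv a) (Cmul a b)) by (field; auto). rewrite H. ring.
Qed.

Lemma Cmul_neq0 a b : a <> C0 -> b <> C0 -> Cmul a b <> C0.
Proof. intros Ha Hb E. destruct (Cmul_eq0 a b E); auto. Qed.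

Section Vec.
Variable X : CBanach.
Local Notation "0v" := (vzero X).
Local Notation "x +v y" := (vadd X x y) (at level 50, left associativity).
Local Notation "a *v x" := (vscal X a x) (at level 40, left associativity).

Lemma vadd_0l x : 0v +v x = x.
Proof. rewrite vadd_comm; apply vadd_0. Qed.

Lemma vadd_cancel x y z : x +v y = x +v z -> y = z.
Proof.
  intro H. rewrite <- (vadd_0l y), <- (vadd_0l z).
  rewrite <- (vadd_opp X x). rewrite (vadd_comm X x (vopp X x)).
  rewrite <- !vadd_assoc, H. reflexivity.
Qed.

Lemma vscal_0s x : C0 *v x = 0v.
Proof.
  apply (vadd_cancel (C0 *v x)). rewrite vadd_0, <- vscal_adds.
  f_equal. apply C_ext; simpl; ring.
Qed.

Lemma vscal_0v a : a *v 0v = 0v.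
Proof.
  apply (vadd_cancel (a *v 0v)). rewrite vadd_0, <- vscal_addv, vadd_0. reflexivity.
Qed.

Lemma vopp_scal x : vopp X x = (Copp C1) *v x.
Proof.
  apply (vadd_cancel x). rewrite vadd_opp.
  rewrite <- (vscal_1 X x) at 1. rewrite <- vscal_adds.
  replace (Cadd C1 (Copp C1)) with C0 by (apply C_ext; simpl; ring).
  symmetry; apply vscal_0s.
Qed.

Lemma vscal_addv' a x y : a *v (x +v y) = a *v x +v a *v y.
Proof. apply vscal_addv. Qed.

Lemma vadd_scal_same a b x : a *v x +v b *v x = (Cadd a b) *v x.
Proof. symmetry; apply vscal_adds. Qed.

Lemma vscal_scal a b x : a *v (b *v x) = (Cmul a b) *v x.
Proof. apply vscal_assoc. Qed.

Lemma vadd_swap4 a b c d : (a +v b) +v (c +v d) = (a +v c) +v (b +v d).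
Proof.
  rewrite <- !vadd_assoc. f_equal. rewrite !vadd_assoc. f_equal. apply vadd_comm.
Qed.

Lemma vnorm_0 : vnorm X 0v = 0.
Proof.
  rewrite <- (vscal_0s 0v), vnorm_scal, Cabs_C0. ring.
Qed.

Lemma vnorm_opp x : vnorm X (vopp X x) = vnorm X x.
Proof.
  rewrite vopp_scal, vnorm_scal.
  replace (Copp C1) with (mkC (-1) 0) by (apply C_ext; simpl; ring).
  rewrite Cabs_real. replace (-1) with (-(1)) by ring. rewrite Rabs_Ropp, Rabs_R1. ring.
Qed.

Lemma vsub_eq0 x y : x +v vopp X y = 0v -> x = y.
Proof.
  intro H. rewrite <- (vadd_0 X x), <- (vadd_opp X y), (vadd_comm X y), vadd_assoc, H.
  apply vadd_0l.
Qed.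

Lemma vscal_inj a x y : a <> C0 -> a *v x = a *v y -> x = y.
Proof.
  intros Ha H. rewrite <- (vscal_1 X x), <- (vscal_1 X y).
  replace C1 with (Cmul (Cinv a) a) by (field; auto).
  rewrite <- !vscal_assoc, H. reflexivity.
Qed.

Lemma vscal_eq0 a x : a *v x = 0v -> a = C0 \/ x = 0v.
Proof.
  intro H. destruct (Classical_Prop.classic (a = C0)) as [Ha|Ha]; [left; auto| right].
  apply (vscal_inj a); auto. rewrite vscal_0v; auto.
Qed.

End Vec.


Section Poly.
Variable X : CBanach.
Local Notation "0v" := (vzero X).
Local Notation "x +v y" := (vadd X x y) (at level 50, left associativity).
Local Notation "a *v x" := (vscal X a x) (at level 40, left associativity).

Lemma lin_0 (T : op X) : linear X T -> T 0v = 0v.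
Proof.
  intros [Ha Hs]. rewrite <- (vscal_0s X 0v) at 1. rewrite Hs, vscal_0s. reflexivity.
Qed.

Lemma lin_opp (T : op X) x : linear X T -> T (vopp X x) = vopp X (T x).
Proof. intros [Ha Hs]. rewrite !vopp_scal, Hs. reflexivity. Qed.

Lemma lin_comb (T : op X) a b x y : linear X T -> T (a *v x +v b *v y) = a *v T x +v b *v T y.
Proof. intros [Ha Hs]. rewrite Ha, !Hs. reflexivity. Qed.

Fixpoint polyop (T : op X) (p : list C) (z : X) : X :=
  match p with
  | nil => 0v
  | a :: p' => a *v z +v T (polyop T p' z)
  end.

Fixpoint padd (p q : list C) : list C :=
  match p, q with
  | nil, _ => q
  | _, nil => p
  | a :: p', b :: q' => Cadd a b :: padd p' q'
  end.

Definition pscal (a : C) (p : list C) : list C := map (Cmul a) p.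

Fixpoint pmul (p q : list C) : list C :=
  match p with
  | nil => nil
  | a :: p' => padd (pscal a q) (C0 :: pmul p' q)
  end.

Variable T : op X.
Hypothesis HT : linear X T.

Lemma polyop_add p q z : polyop T (padd p q) z = polyop T p z +v polyop T q z.
Proof.
  revert q; induction p as [|a p IH]; intros [|b q]; simpl.
  - rewrite vadd_0; reflexivity.
  - rewrite vadd_0l; reflexivity.
  - rewrite vadd_0; reflexivity.
  - rewrite IH, (proj1 HT), vscal_adds, vadd_swap4. reflexivity.
Qed.

Lemma polyop_scal a p z : polyop T (pscal a p) z = a *v polyop T p z.
Proof.
  unfold pscal; induction p as [|b p IH]; simpl.
  - rewrite vscal_0v; reflexivity.
  - rewrite IH, (proj2 HT), vscal_addv, vscal_assoc. reflexivity.
Qed.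

Lemma polyop_mul p q z : polyop T (pmul p q) z = polyop T p (polyop T q z).
Proof.
  induction p as [|a p IH]; simpl; [reflexivity|].
  rewrite polyop_add, polyop_scal. simpl. rewrite vscal_0s, vadd_0l, IH. reflexivity.
Qed.

Lemma polyop_lin p : linear X (polyop T p).
Proof.
  induction p as [|a p [IHa IHs]]; split; simpl; intros.
  - rewrite vadd_0; reflexivity.
  - rewrite vscal_0v; reflexivity.
  - rewrite IHa, (proj1 HT), vscal_addv, vadd_swap4. reflexivity.
  - rewrite IHs, (proj2 HT), vscal_addv, !vscal_assoc. f_equal. f_equal.
    apply C_ext; simpl; ring.
Qed.

Lemma polyop_bounded p : bounded_op X T -> bounded_op X (polyop T p).
Proof.
  intros [_ [M HM]]. split; [apply polyop_lin|].
  induction p as [|a p [N HN]]; simpl.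
  - exists 0. intros. rewrite vnorm_0. pose proof (vnorm_nonneg X x); nra.
  - exists (Cabs a + Rabs M * Rabs N). intro x.
    eapply Rle_trans; [apply vnorm_triangle|]. rewrite vnorm_scal.
    pose proof (vnorm_nonneg X x). pose proof (HM (polyop T p x)). pose proof (HN x).
    pose proof (vnorm_nonneg X (polyop T p x)).
    assert (vnorm X (T (polyop T p x)) <= Rabs M * (Rabs N * vnorm X x)).
    { eapply Rle_trans; [apply H0|]. apply Rle_trans with (Rabs M * vnorm X (polyop T p x)).
      - apply Rmult_le_compat_r; auto. apply Rle_abs.
      - apply Rmult_le_compat_l; [apply Rabs_pos|]. eapply Rle_trans; [apply H1|].
        apply Rmult_le_compat_r; auto. apply Rle_abs. }
    nra.
Qed.

Lemma polyop_lamT lam z :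
  polyop T (lam :: Copp C1 :: nil) z = vadd X (vscal X lam z) (vopp X (T z)).
Proof.
  simpl. rewrite lin_0 by auto. rewrite vadd_0, vopp_scal, (proj2 HT). reflexivity.
Qed.

End Poly.

Section Spec.
Variable X : CBanach.
Local Notation "0v" := (vzero X).
Local Notation "x +v y" := (vadd X x y) (at level 50, left associativity).
Local Notation "a *v x" := (vscal X a x) (at level 40, left associativity).

Lemma scal_bounded (S : op X) a : bounded_op X S -> bounded_op X (fun x => a *v S x).
Proof.
  intros [[Ha Hs] [M HM]]. split; [split|].
  - intros. rewrite Ha, vscal_addv. reflexivity.
  - intros. rewrite Hs, !vscal_assoc. f_equal. apply C_ext; simpl; ring.
  - exists (Cabs a * M). intros. rewrite vnorm_scal, Rmult_assoc.
    apply Rmult_le_compat_l; [apply Cabs_nonneg| apply HM].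
Qed.

Lemma not_spectrum_poly (T : op X) (lam d : C) (q : list C) :
  bounded_op X T -> d <> C0 ->
  (forall z, polyop X T (pmul (lam :: Copp C1 :: nil) q) z = d *v z) ->
  (forall z, polyop X T (pmul q (lam :: Copp C1 :: nil)) z = d *v z) ->
  ~ spectrum X T lam.
Proof.
  intros HT Hd H1 H2 Hs. apply Hs.
  exists (fun x => Cinv d *v polyop X T q x). split; [|split].
  - apply scal_bounded, polyop_bounded; auto; apply HT.
  - intro x. rewrite <- polyop_lamT by apply HT. rewrite <- polyop_mul by apply HT.
    rewrite H2, vscal_assoc. replace (Cmul (Cinv d) d) with C1 by (field; auto). apply vscal_1.
  - intro x. rewrite <- polyop_lamT by apply HT.
    rewrite (proj2 (polyop_lin X T (proj1 HT) _)).
    rewrite <- polyop_mul by apply HT.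
    rewrite H1, vscal_assoc. replace (Cmul (Cinv d) d) with C1 by (field; auto). apply vscal_1.
Qed.

Lemma eigen_spectrum (T : op X) lam v : v <> 0v -> T v = lam *v v -> spectrum X T lam.
Proof.
  intros Hv HTv [S [[[Sa Ss] _] [H1 H2]]]. apply Hv.
  rewrite <- (H1 v), HTv, vadd_opp.
  rewrite <- (vscal_0s X 0v) at 1. rewrite Ss, vscal_0s. reflexivity.
Qed.

End Spec.


Section Rank1.
Variable X : CBanach.
Local Notation "0v" := (vzero X).
Local Notation "x +v y" := (vadd X x y) (at level 50, left associativity).
Local Notation "a *v x" := (vscal X a x) (at level 40, left associativity).

Lemma comp_bounded (S T : op X) : bounded_op X S -> bounded_op X T -> bounded_op X (op_comp X S T).
Proof.
  intros [[Sa Ss] [M HM]] [[Ta Ts] [N HN]]. split; [split|]; unfold op_comp.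
  - intros. rewrite Ta, Sa. reflexivity.
  - intros. rewrite Ts, Ss. reflexivity.
  - exists (Rabs M * Rabs N). intro x.
    eapply Rle_trans; [apply HM|].
    pose proof (vnorm_nonneg X x). pose proof (vnorm_nonneg X (T x)). pose proof (HN x).
    apply Rle_trans with (Rabs M * vnorm X (T x)).
    + apply Rmult_le_compat_r; auto. apply Rle_abs.
    + rewrite Rmult_assoc. apply Rmult_le_compat_l; [apply Rabs_pos|].
      eapply Rle_trans; [apply H1|]. apply Rmult_le_compat_r; auto. apply Rle_abs.
Qed.

Lemma id_bounded : bounded_op X (op_id X).
Proof.
  split; [split|]; unfold op_id; auto. exists 1. intros; lra.
Qed.

Lemma pow_bounded (B : op X) n : bounded_op X B -> bounded_op X (op_pow X B n).
Proof.
  intro HB. induction n as [|n IH].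
  - apply id_bounded.
  - assert (E : op_pow X B (S n) = op_comp X B (op_pow X B n)) by reflexivity.
    rewrite E. apply comp_bounded; auto.
Qed.

Lemma span1_lin (L : op X) y v : linear X L -> in_span X (y :: nil) v -> in_span X (L y :: nil) (L v).
Proof.
  intros HL [a [w [Hw Hv]]]. simpl in Hw. subst.
  exists a, 0v. split; [reflexivity|]. rewrite (proj1 HL), (proj2 HL), lin_0; auto.
Qed.

Lemma span1_inv y v : in_span X (y :: nil) v -> exists a, v = a *v y.
Proof. intros [a [w [Hw Hv]]]. simpl in Hw. subst. exists a. apply vadd_0. Qed.

Lemma polyop3 (T : op X) c a0 a1 a2 z :
  linear X T -> (forall x, T (T x) = c *v T x) -> Cadd a1 (Cmul a2 c) = C0 ->
  polyop X T (a0 :: a1 :: a2 :: nil) z = a0 *v z.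
Proof.
  intros HT Hc Ha. simpl. rewrite lin_0, vadd_0 by auto.
  rewrite (proj1 HT), !(proj2 HT), Hc, vscal_assoc, vadd_scal_same, Ha, vscal_0s, vadd_0.
  reflexivity.
Qed.

Lemma zero_in_spec_rank1 (T : op X) y : dim_ge2 X -> (forall x, in_span X (y :: nil) (T x)) ->
  spectrum X T C0.
Proof.
  intros [u [w Hind]] Hspan [S [_ [_ H2]]].
  assert (Hv : forall v, exists a, v = a *v y).
  { intro v. destruct (span1_inv _ _ (Hspan (S v))) as [a Ha].
    exists (Copp a). rewrite <- (H2 v), vscal_0s, vadd_0l, Ha, vopp_scal, vscal_assoc.
    f_equal. apply C_ext; simpl; ring. }
  destruct (Hv u) as [a Ha], (Hv w) as [b Hb].
  destruct (Classical_Prop.classic (a = C0 /\ b = C0)) as [[-> ->]|Hab].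
  - destruct (Hind C1 C0) as [E _]; [|exact (C1_neq_C0 E)].
    rewrite Ha, !vscal_0s, !vscal_0v, vadd_0. reflexivity.
  - destruct (Hind b (Copp a)) as [E1 E2].
    + rewrite Ha, Hb, !vscal_assoc, vadd_scal_same.
      replace (Cadd (Cmul b a) (Cmul (Copp a) b)) with C0 by ring. apply vscal_0s.
    + apply Hab. split; auto. replace a with (Copp (Copp a)) by ring. rewrite E2. ring.
Qed.

Lemma rank1_periph (T : op X) y : dim_ge2 X -> bounded_op X T ->
  (forall x, in_span X (y :: nil) (T x)) ->
  is_singleton (peripheral_spectrum X T).
Proof.
  intros Hd HT Hspan.
  assert (Hc : exists c, (forall x, T (T x) = c *v T x) /\ spectrum X T c).
  { destruct (Classical_Prop.classic (y = 0v)) as [Hy|Hy].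
    - exists C0. assert (Hz : forall x, T x = 0v).
      { intro x. destruct (span1_inv _ _ (Hspan x)) as [a Ha]. rewrite Ha, Hy, vscal_0v. auto. }
      split; [intro x; rewrite !Hz, vscal_0v; auto| eapply zero_in_spec_rank1; eauto].
    - destruct (span1_inv _ _ (Hspan y)) as [c Hc]. exists c. split.
      + intro x. destruct (span1_inv _ _ (Hspan x)) as [a Ha]. rewrite Ha, (proj2 (proj1 HT)), Hc.
        rewrite !vscal_assoc. f_equal. ring.
      + destruct (Classical_Prop.classic (c = C0)) as [->|Hc0]; [eapply zero_in_spec_rank1; eauto|].
        eapply eigen_spectrum; eauto. }
  destruct Hc as [c [Hc Hsc]].
  assert (Hsub : forall lam, spectrum X T lam -> lam = C0 \/ lam = c).
  { intros lam Hl. destruct (Classical_Prop.classic (lam = C0)) as [|H0]; [left; auto|].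
    destruct (Classical_Prop.classic (lam = c)) as [|H1]; [right; auto|].
    exfalso. revert Hl.
    assert (Hne : Csub lam c <> C0).
    { intro E. apply H1. replace lam with (Cadd (Csub lam c) c) by ring. rewrite E. ring. }
    apply (not_spectrum_poly X T lam (Cmul lam (Csub lam c)) (Csub lam c :: C1 :: nil)); auto.
    - apply Cmul_neq0; auto.
    - intro z. cbn [pmul padd pscal map]. rewrite (polyop3 T c); [f_equal; ring|apply HT|exact Hc|ring].
    - intro z. cbn [pmul padd pscal map]. rewrite (polyop3 T c); [f_equal; ring|apply HT|exact Hc|ring]. }
  exists c. intro w. split.
  - intros [Hw Hr]. destruct (Hsub w Hw) as [->|]; auto.
    destruct (Classical_Prop.classic (c = C0)) as [|Hc0]; auto. exfalso.
    destruct Hr as [Hub _]. rewrite Cabs_C0 in Hub.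
    assert (Cabs c <= 0) by (apply Hub; eauto).
    apply Hc0, Cabs_eq0. pose proof (Cabs_nonneg c); lra.
  - intros ->. split; auto. split.
    + intros t [lam [Hl ->]]. destruct (Hsub lam Hl) as [->| ->]; [|lra].
      rewrite Cabs_C0. apply Cabs_nonneg.
    + intros b Hb. apply Hb. eauto.
Qed.

End Rank1.

Section Zorn.
Variable P : Type.
Variable le : P -> P -> Prop.
Hypothesis le_refl : forall x, le x x.
Hypothesis le_trans : forall x y z, le x y -> le y z -> le x z.
Definition pchain (C : P -> Prop) := forall x y, C x -> C y -> le x y \/ le y x.
Hypothesis ub : forall C, pchain C -> exists b, forall x, C x -> le x b.

Definition incl (A B : P -> Prop) := forall x, A x -> B x.

Section Contra.
Hypothesis Hno : forall m, exists x, le m x /\ ~ le x m.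

Lemma sfun_ex (C : P -> Prop) : exists y, pchain C -> forall x, C x -> le x y /\ ~ le y x.
Proof.
  destruct (classic (pchain C)) as [HC|HC].
  - destruct (ub C HC) as [b Hb]. destruct (Hno b) as [y [H1 H2]]. exists y. intros _ x Hx.
    split; [eauto|]. intro H. apply H2. eauto.
  - destruct (ub (fun _ => False)) as [b _]; [intros x y []|]. exists b. intro; contradiction.
Qed.

Definition sfun (C : P -> Prop) : P := proj1_sig (constructive_indefinite_description _ (sfun_ex C)).
Lemma sfun_spec C : pchain C -> forall x, C x -> le x (sfun C) /\ ~ le (sfun C) x.
Proof. unfold sfun. destruct (constructive_indefinite_description _ (sfun_ex C)); simpl; auto. Qed.

Definition gset (C : P -> Prop) : P -> Prop := fun x => C x \/ x = sfun C.

Definition tower (T : (P -> Prop) -> Prop) :=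
  T (fun _ => False) /\ (forall A, T A -> T (gset A)) /\
  (forall F : (P -> Prop) -> Prop, (forall A, F A -> T A) -> T (fun x => exists A, F A /\ A x)).

Definition Mset (A : P -> Prop) := forall T, tower T -> T A.

Lemma M_tower : tower Mset.
Proof.
  split; [|split].
  - intros T [H _]; auto.
  - intros A HA T HT. pose proof HT as [_ [H _]]. apply H, HA; exact HT.
  - intros F HF T HT. pose proof HT as [H0 [H1 H2]]. apply H2. intros A HA. apply HF; auto.
Qed.

Lemma M_ind (Q : (P -> Prop) -> Prop) : tower (fun A => Mset A /\ Q A) -> forall A, Mset A -> Q A.
Proof. intros HT A HA. apply (HA _ HT). Qed.

Definition comparable C := Mset C /\ forall A, Mset A -> incl A C \/ incl C A.

Lemma incl_gset A : incl A (gset A).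
Proof. intros x H; left; auto. Qed.

Lemma lemma1 C : comparable C -> forall A, Mset A -> incl A C \/ incl (gset C) A.
Proof.
  intros [HMC HC]. apply M_ind. destruct M_tower as [T0 [T1 T2]]. split; [|split].
  - split; auto. left. intros x [].
  - intros A [HMA [HAC|HgA]]; split; auto.
    + destruct (HC (gset A) (T1 A HMA)) as [H|H]; [left; auto|].
      destruct (classic (incl C A)) as [HCA|HCA].
      * assert (E : A = C).
        { apply functional_extensionality; intro x. apply propositional_extensionality; split; auto. }
        subst. right. intros x Hx; auto.
      * apply not_all_ex_not in HCA. destruct HCA as [c Hc].
        apply imply_to_and in Hc. destruct Hc as [Hc1 Hc2].
        destruct (H c Hc1) as [|Ec]; [contradiction|].
        left. intros x [Hx| ->]; auto. rewrite <- Ec; auto.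
    + right. intros x Hx. left. auto.
  - intros F HF. split.
    + apply T2. intros; apply HF; auto.
    + destruct (classic (forall A, F A -> incl A C)) as [Hall|Hall].
      * left. intros x [A [HA Hx]]. eapply Hall; eauto.
      * apply not_all_ex_not in Hall. destruct Hall as [A HA]. apply imply_to_and in HA.
        destruct HA as [HA1 HA2]. destruct (HF A HA1) as [_ [|Hg]]; [contradiction|].
        right. intros x Hx. exists A; split; auto.
Qed.

Lemma lemma2 : forall A, Mset A -> comparable A.
Proof.
  apply M_ind. destruct M_tower as [T0 [T1 T2]]. split; [|split].
  - split; auto. split; auto. intros A _. right. intros x [].
  - intros C [HMC HC]. split; auto. split; auto. intros A HA.
    destruct (lemma1 C HC A HA) as [H|H].
    + left. intros x Hx. left; auto.
    + right; auto.
  - intros F HF. split; [apply T2; intros; apply HF; auto|]. split; [apply T2; intros; apply HF; auto|].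
    intros A HA. destruct (classic (forall C, F C -> incl C A)) as [Hall|Hall].
    + right. intros x [C [HC Hx]]. eapply Hall; eauto.
    + apply not_all_ex_not in Hall. destruct Hall as [C HC]. apply imply_to_and in HC.
      destruct HC as [HC1 HC2]. destruct (HF C HC1) as [_ [_ Hc]].
      destruct (Hc A HA) as [H|H]; [|contradiction].
      left. intros x Hx. exists C; split; auto.
Qed.

Lemma lemma3 : forall A, Mset A -> pchain A.
Proof.
  apply M_ind. destruct M_tower as [T0 [T1 T2]]. split; [|split].
  - split; auto. intros x y [].
  - intros A [HMA HA]. split; auto. intros x y [Hx| ->] [Hy| ->].
    + auto.
    + left. apply (sfun_spec A HA x Hx).
    + right. apply (sfun_spec A HA y Hy).
    + left; auto.
  - intros F HF. split; [apply T2; intros; apply HF; auto|].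
    intros x y [A1 [HA1 Hx]] [A2 [HA2 Hy]].
    destruct (HF A1 HA1) as [HM1 HC1], (HF A2 HA2) as [HM2 HC2].
    destruct (proj2 (lemma2 A1 HM1) A2 HM2) as [H|H].
    + apply HC1; auto.
    + apply HC2; auto.
Qed.

Lemma zorn_contra : False.
Proof.
  destruct M_tower as [T0 [T1 T2]].
  set (U := fun x => exists A, Mset A /\ A x).
  assert (HU : Mset U) by (apply T2; auto).
  assert (Hg : incl (gset U) U) by (intros x Hx; exists (gset U); split; auto).
  assert (Hs : U (sfun U)) by (apply Hg; right; auto).
  destruct (sfun_spec U (lemma3 U HU) _ Hs) as [_ H]. apply H, le_refl.
Qed.
End Contra.

Lemma zorn : exists m, forall x, le m x -> le x m.
Proof.
  apply NNPP. intro H. apply zorn_contra. intro m.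
  apply not_ex_all_not with (n := m) in H. apply not_all_ex_not in H.
  destruct H as [x Hx]. apply imply_to_and in Hx. eauto.
Qed.
End Zorn.


Section HB.
Variable X : CBanach.
Local Notation "0v" := (vzero X).
Local Notation "x +v y" := (vadd X x y) (at level 50, left associativity).
Local Notation "a *v x" := (vscal X a x) (at level 40, left associativity).
Local Notation nrm := (vnorm X).

Definition rs (t : R) (x : X) : X := mkC t 0 *v x.

Lemma rs_add t x y : rs t (x +v y) = rs t x +v rs t y.
Proof. apply vscal_addv. Qed.
Lemma rs_adds t s x : rs (t + s) x = rs t x +v rs s x.
Proof. unfold rs. rewrite <- vscal_adds. f_equal. apply C_ext; simpl; ring. Qed.
Lemma rs_rs t s x : rs t (rs s x) = rs (t * s) x.
Proof. unfold rs. rewrite vscal_assoc. f_equal. apply C_ext; simpl; ring. Qed.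
Lemma rs_1 x : rs 1 x = x.
Proof. unfold rs. rewrite <- (vscal_1 X x) at 2. f_equal. Qed.
Lemma rs_0 x : rs 0 x = 0v.
Proof. unfold rs. rewrite <- (vscal_0s X x). f_equal. Qed.
Lemma rs_0v t : rs t 0v = 0v.
Proof. apply vscal_0v. Qed.
Lemma rs_m1 x : rs (-1) x = vopp X x.
Proof. unfold rs. rewrite vopp_scal. f_equal. apply C_ext; simpl; ring. Qed.
Lemma rs_norm t x : nrm (rs t x) = Rabs t * nrm x.
Proof. unfold rs. rewrite vnorm_scal, Cabs_real. reflexivity. Qed.

Definition rsub (D : X -> Prop) := D 0v /\ (forall x y, D x -> D y -> D (x +v y)) /\ (forall t x, D x -> D (rs t x)).

Variable u : X.
Hypothesis Hu : u <> 0v.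

Record pext := mkP {
  pD : X -> Prop; pf : X -> R;
  pD_sub : rsub pD;
  pf_add : forall x y, pD x -> pD y -> pf (x +v y) = pf x + pf y;
  pf_rs : forall t x, pD x -> pf (rs t x) = t * pf x;
  pf_le : forall x, pD x -> pf x <= nrm x;
  pD_u : pD u;
  pf_u : pf u = nrm u }.

Definition ple (e1 e2 : pext) := (forall x, pD e1 x -> pD e2 x) /\ (forall x, pD e1 x -> pf e2 x = pf e1 x).

Section Ext.
Variable D : X -> Prop.
Variable f : X -> R.
Hypothesis HD : rsub D.
Hypothesis Hfa : forall x y, D x -> D y -> f (x +v y) = f x + f y.
Hypothesis Hfr : forall t x, D x -> f (rs t x) = t * f x.
Variable z : X.
Hypothesis Hz : ~ D z.
Variable c : R.
Hypothesis Hc1 : forall x, D x -> f x <= c + nrm (x +v vopp X z).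
Hypothesis Hc2 : forall y, D y -> c <= nrm (y +v z) - f y.

Definition D' x := exists y t, D y /\ x = y +v rs t z.

Lemma ext_unique y1 t1 y2 t2 : D y1 -> D y2 -> y1 +v rs t1 z = y2 +v rs t2 z -> y1 = y2 /\ t1 = t2.
Proof.
  intros H1 H2 E. destruct HD as [HD0 [HDa HDr]].
  assert (Ht : t1 = t2).
  { apply NNPP; intro Hne. apply Hz.
    assert (E2 : rs (t1 - t2) z = y2 +v vopp X y1).
    { apply (vadd_cancel X (y1 +v rs t2 z)).
      transitivity (y2 +v rs t2 z).
      { rewrite <- vadd_assoc, <- rs_adds. replace (t2 + (t1 - t2)) with t1 by ring. exact E. }
      rewrite (vadd_comm X y2 (vopp X y1)), vadd_assoc, (vadd_comm X y1 (rs t2 z)).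
      rewrite <- (vadd_assoc X (rs t2 z)), vadd_opp, vadd_0, vadd_comm. auto. }
    replace z with (rs (/(t1 - t2)) (rs (t1 - t2) z)).
    - rewrite E2. apply HDr. apply HDa; auto. rewrite <- rs_m1. auto.
    - rewrite rs_rs, Rinv_l, rs_1; auto. lra. }
  subst. split; auto. rewrite (vadd_comm X y1), (vadd_comm X y2) in E. apply vadd_cancel in E. auto.
Qed.

Definition pick (x : X) : X * R :=
  epsilon (inhabits (0v, 0%R)) (fun p => D (fst p) /\ x = fst p +v rs (snd p) z).

Definition f' (x : X) : R := f (fst (pick x)) + snd (pick x) * c.

Lemma f'_eq y t : D y -> f' (y +v rs t z) = f y + t * c.
Proof.
  intro Hy. unfold f'.
  assert (H : exists p, (fun p => D (fst p) /\ y +v rs t z = fst p +v rs (snd p) z) p)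
    by (exists (y, t); simpl; auto).
  pose proof (epsilon_spec (inhabits (0v, 0%R)) _ H) as [H1 H2].
  fold (pick (y +v rs t z)) in H1, H2.
  destruct (ext_unique _ _ _ _ Hy H1 H2) as [<- <-]. reflexivity.
Qed.

Lemma D'_sub : rsub D'.
Proof.
  destruct HD as [HD0 [HDa HDr]]. split; [|split].
  - exists 0v, 0. split; auto. rewrite rs_0, vadd_0. auto.
  - intros x1 x2 [y1 [t1 [H1 ->]]] [y2 [t2 [H2 ->]]]. exists (y1 +v y2), (t1 + t2). split; auto.
    rewrite rs_adds, vadd_swap4. auto.
  - intros t x [y [s [H ->]]]. exists (rs t y), (t * s). split; auto. rewrite rs_add, rs_rs. auto.
Qed.

Lemma f'_add x1 x2 : D' x1 -> D' x2 -> f' (x1 +v x2) = f' x1 + f' x2.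
Proof.
  destruct HD as [HD0 [HDa HDr]].
  intros [y1 [t1 [H1 ->]]] [y2 [t2 [H2 ->]]].
  rewrite vadd_swap4, <- rs_adds, !f'_eq, Hfa; auto. ring.
Qed.

Lemma f'_rs t x : D' x -> f' (rs t x) = t * f' x.
Proof.
  destruct HD as [HD0 [HDa HDr]].
  intros [y [s [H ->]]]. rewrite rs_add, rs_rs, !f'_eq, Hfr; auto. ring.
Qed.

Lemma f'_le x : (forall x, D x -> f x <= nrm x) -> D' x -> f' x <= nrm x.
Proof.
  destruct HD as [HD0 [HDa HDr]].
  intros Hle [y [t [H ->]]]. rewrite f'_eq; auto.
  destruct (Rtotal_order t 0) as [Ht|[Ht|Ht]].
  - set (x' := rs (- / t) y).
    assert (Hx' : D x') by (apply HDr; auto).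
    pose proof (Hc1 x' Hx') as Hc.
    assert (Ef : f x' = - / t * f y) by (apply Hfr; auto).
    assert (En : nrm (x' +v vopp X z) = (- / t) * nrm (y +v rs t z)).
    { replace (x' +v vopp X z) with (rs (- / t) (y +v rs t z)).
      - assert (/t < 0) by (apply Rinv_lt_0_compat; auto).
        rewrite rs_norm, Rabs_right; auto. lra.
      - unfold x'. rewrite rs_add, rs_rs, <- rs_m1. f_equal. f_equal. field. lra. }
    rewrite Ef, En in Hc.
    assert (0 < - t) by lra.
    apply Rmult_le_compat_l with (r := - t) in Hc; [|lra].
    replace (- t * (- / t * f y)) with (f y) in Hc by (field; lra).
    replace (- t * (c + - / t * nrm (y +v rs t z))) with (- t * c + nrm (y +v rs t z)) in Hc by (field; lra).
    lra.
  - subst. rewrite rs_0, vadd_0, Rmult_0_l, Rplus_0_r. auto.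
  - set (x' := rs (/ t) y).
    assert (Hx' : D x') by (apply HDr; auto).
    pose proof (Hc2 x' Hx') as Hc.
    assert (Ef : f x' = / t * f y) by (apply Hfr; auto).
    assert (En : nrm (x' +v z) = (/ t) * nrm (y +v rs t z)).
    { replace (x' +v z) with (rs (/ t) (y +v rs t z)).
      - rewrite rs_norm, Rabs_right; auto. apply Rle_ge, Rlt_le, Rinv_0_lt_compat; auto.
      - unfold x'. rewrite rs_add, rs_rs. rewrite Rinv_l, rs_1; auto. lra. }
    rewrite Ef, En in Hc.
    apply Rmult_le_compat_l with (r := t) in Hc; [|lra].
    replace (t * (/ t * nrm (y +v rs t z) - / t * f y)) with (nrm (y +v rs t z) - f y) in Hc by (field; lra).
    lra.
Qed.

Lemma f'_ext x : D x -> f' x = f x.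
Proof.
  intro H. replace x with (x +v rs 0 z) at 1 by (rewrite rs_0, vadd_0; auto).
  rewrite f'_eq; auto. ring.
Qed.

Lemma D'_z : D' z.
Proof. exists 0v, 1. split; [apply HD|]. rewrite rs_1, vadd_0l. auto. Qed.

Lemma f'_z : f' z = c.
Proof. replace z with (0v +v rs 1 z) at 1 by (rewrite rs_1, vadd_0l; auto).
  rewrite f'_eq by apply HD. rewrite <- (rs_0 0v). rewrite Hfr by apply HD. ring. Qed.

Lemma D'_ext x : D x -> D' x.
Proof. intro H. exists x, 0. split; auto. rewrite rs_0, vadd_0; auto. Qed.
End Ext.

Lemma exists_c (D : X -> Prop) (f : X -> R) z : rsub D ->
  (forall x y, D x -> D y -> f (x +v y) = f x + f y) -> (forall x, D x -> f x <= nrm x) ->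
  exists c, (forall x, D x -> f x <= c + nrm (x +v vopp X z)) /\
            (forall y, D y -> c <= nrm (y +v z) - f y).
Proof.
  intros HD Hfa Hle.
  assert (Key : forall x y, D x -> D y -> f x - nrm (x +v vopp X z) <= nrm (y +v z) - f y).
  { intros x y Hx Hy. pose proof (Hle (x +v y) (proj1 (proj2 HD) _ _ Hx Hy)) as H.
    rewrite Hfa in H; auto.
    assert (E : x +v y = (x +v vopp X z) +v (y +v z)).
    { rewrite vadd_swap4, (vadd_comm X (vopp X z)), vadd_opp, vadd_0. auto. }
    pose proof (vnorm_triangle X (x +v vopp X z) (y +v z)). rewrite <- E in H0. lra. }
  set (S := fun r => exists x, D x /\ r = f x - nrm (x +v vopp X z)).
  destruct (completeness S) as [c [Hub Hlub]].
  - exists (nrm (0v +v z) - f 0v). intros r [x [Hx ->]]. apply Key; auto. apply HD.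
  - exists (f 0v - nrm (0v +v vopp X z)). exists 0v. split; auto. apply HD.
  - exists c. split.
    + intros x Hx. assert (f x - nrm (x +v vopp X z) <= c) by (apply Hub; exists x; auto). lra.
    + intros y Hy. apply Hlub. intros r [x [Hx ->]]. apply Key; auto.
Qed.

Definition ext_pext (e : pext) (z : X) (Hz : ~ pD e z) : { e' : pext | ple e e' /\ pD e' z }.
Proof.
  destruct (constructive_indefinite_description _
      (exists_c (pD e) (pf e) z (pD_sub e) (pf_add e) (pf_le e))) as [c [Hc1 Hc2]].
  set (HD := pD_sub e).
  unshelve eexists (mkP (D' (pD e) z) (f' (pD e) (pf e) z c) _ _ _ _ _ _).
  - apply D'_sub; auto.
  - intros; eapply f'_add; eauto; intros; first [apply pf_add|apply pf_rs|apply pf_le]; auto.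
  - intros; eapply f'_rs; eauto; intros; first [apply pf_add|apply pf_rs|apply pf_le]; auto.
  - intros; eapply f'_le; eauto; intros; first [apply pf_add|apply pf_rs|apply pf_le]; auto.
  - eapply D'_ext; eauto; apply pD_u.
  - erewrite f'_ext; eauto; try apply pf_u; try apply pD_u; intros; first [apply pf_add|apply pf_rs|apply pf_le]; auto.
  - simpl. split; [split|].
    + intros; eapply D'_ext; eauto.
    + intros; eapply f'_ext; eauto; intros; first [apply pf_add|apply pf_rs|apply pf_le]; auto.
    + eapply D'_z; eauto.
Defined.


Lemma rsub0 : rsub (fun x => x = 0v).
Proof.
  split; [auto|split]; intros.
  - subst. apply vadd_0.
  - subst. apply rs_0v.
Qed.

Definition base_pext : pext.
Proof.
  set (D := fun x : X => x = 0v). set (f := fun _ : X => 0%R).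
  assert (Hfa : forall x y, D x -> D y -> f (x +v y) = f x + f y) by (intros; unfold f; ring).
  assert (Hfr : forall t x, D x -> f (rs t x) = t * f x) by (intros; unfold f; ring).
  assert (Hz : ~ D u) by exact Hu.
  assert (Hc1 : forall x, D x -> f x <= nrm u + nrm (x +v vopp X u)).
  { intros x Hx. unfold f. pose proof (vnorm_nonneg X u). pose proof (vnorm_nonneg X (x +v vopp X u)). lra. }
  assert (Hc2 : forall y, D y -> nrm u <= nrm (y +v u) - f y).
  { intros y Hy. unfold D in Hy. subst. unfold f. rewrite vadd_0l. lra. }
  refine (mkP (D' D u) (f' D f u (nrm u)) _ _ _ _ _ _).
  - apply D'_sub; apply rsub0.
  - intros; eapply f'_add; eauto; apply rsub0.
  - intros; eapply f'_rs; eauto; apply rsub0.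
  - intros; eapply f'_le; eauto; try apply rsub0. intros x0 Hx0. unfold f. apply vnorm_nonneg.
  - eapply D'_z; apply rsub0.
  - eapply f'_z; eauto; apply rsub0.
Defined.

Lemma base_le (e : pext) : ple base_pext e.
Proof.
  destruct (pD_sub e) as [HD0 [HDa HDr]].
  split; simpl.
  - intros x [y [t [Hy ->]]]. unfold rs in *. rewrite Hy. rewrite vadd_0l. apply HDr, pD_u.
  - intros x [y [t [Hy ->]]]. rewrite Hy.
    rewrite (f'_eq (fun x => x = 0v)); auto; try apply rsub0.
    rewrite vadd_0l, pf_rs, pf_u by apply pD_u. ring.
Qed.

Lemma pchain_ub (Ch : pext -> Prop) : pchain pext ple Ch -> exists b, forall e, Ch e -> ple e b.
Proof.
  intro HC.
  destruct (classic (exists e, Ch e)) as [[e0 He0]|Hne].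
  2:{ exists base_pext. intros e He. exfalso. apply Hne. eauto. }
  set (UD := fun x => exists e, Ch e /\ pD e x).
  set (pk := fun x => epsilon (inhabits e0) (fun e => Ch e /\ pD e x)).
  set (Uf := fun x => pf (pk x) x).
  assert (Hpk : forall x, UD x -> Ch (pk x) /\ pD (pk x) x).
  { intros x Hx. apply (epsilon_spec (inhabits e0) (fun e => Ch e /\ pD e x)). exact Hx. }
  assert (HUf : forall e x, Ch e -> pD e x -> Uf x = pf e x).
  { intros e x He Hx. destruct (Hpk x) as [H1 H2]; [exists e; auto|].
    unfold Uf. destruct (HC _ _ H1 He) as [[_ Hl]|[_ Hl]].
    - symmetry. apply Hl. auto.
    - apply Hl. auto. }
  assert (Hjoin : forall x y, UD x -> UD y -> exists e, Ch e /\ pD e x /\ pD e y).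
  { intros x y [e1 [H1 Hx]] [e2 [H2 Hy]]. destruct (HC _ _ H1 H2) as [[Hl _]|[Hl _]].
    - exists e2; auto.
    - exists e1; auto. }
  assert (Hsub : rsub UD).
  { split; [|split].
    - exists e0. split; auto. apply (pD_sub e0).
    - intros x y Hx Hy. destruct (Hjoin x y Hx Hy) as [e [He [H1 H2]]]. exists e. split; auto.
      apply (pD_sub e); auto.
    - intros t x [e [He Hx]]. exists e. split; auto. apply (pD_sub e); auto. }
  unshelve eexists (mkP UD Uf Hsub _ _ _ _ _).
  - intros x y Hx Hy. destruct (Hjoin x y Hx Hy) as [e [He [H1 H2]]].
    rewrite !(HUf e); auto. apply pf_add; auto. apply (pD_sub e); auto.
  - intros t x [e [He Hx]]. rewrite !(HUf e); auto. apply pf_rs; auto. apply (pD_sub e); auto.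
  - intros x [e [He Hx]]. rewrite (HUf e); auto. apply pf_le; auto.
  - exists e0. split; auto. apply pD_u.
  - rewrite (HUf e0); auto. apply pf_u. apply pD_u.
  - intros e He. split; simpl.
    + intros x Hx. exists e; auto.
    + intros x Hx. apply HUf; auto.
Qed.

Lemma real_HB : exists f : X -> R,
  (forall x y, f (x +v y) = f x + f y) /\ (forall t x, f (rs t x) = t * f x) /\
  (forall x, f x <= nrm x) /\ f u = nrm u.
Proof.
  destruct (zorn pext ple) as [m Hm].
  - intro e. split; auto.
  - intros e1 e2 e3 [H1 H2] [H3 H4]. split; intros; auto. rewrite H4, H2; auto.
  - apply pchain_ub.
  - assert (Hall : forall z, pD m z).
    { intro z. apply NNPP. intro Hz. destruct (ext_pext m z Hz) as [e' [Hle Hz']].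
      apply Hz. apply (proj1 (Hm e' Hle)). auto. }
    exists (pf m). split; [|split; [|split]].
    + intros; apply pf_add; auto.
    + intros; apply pf_rs; auto.
    + intros; apply pf_le; auto.
    + apply pf_u.
Qed.

End HB.

Section CHB.
Variable X : CBanach.
Local Notation "0v" := (vzero X).
Local Notation "x +v y" := (vadd X x y) (at level 50, left associativity).
Local Notation "a *v x" := (vscal X a x) (at level 40, left associativity).
Local Notation nrm := (vnorm X).

Definition blf (h : X -> C) : Prop :=
  (forall x y, h (x +v y) = Cadd (h x) (h y)) /\ (forall a x, h (a *v x) = Cmul a (h x)) /\
  exists M, forall x, Cabs (h x) <= M * nrm x.

Definition iC : C := mkC 0 1.

Lemma complex_HB u : u <> 0v -> exists h, blf h /\ h u <> C0.
Proof.
  intro Hu. destruct (real_HB X u Hu) as [f [Fa [Fr [Fle Fu]]]].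
  assert (Fabs : forall x, Rabs (f x) <= nrm x).
  { intro x. apply Rabs_le. split; auto.
    assert (E : f (rs X (-1) x) = -1 * f x) by apply Fr.
    pose proof (Fle (rs X (-1) x)). rewrite E, rs_m1, vnorm_opp in H. lra. }
  assert (Hdec : forall a x, a *v x = rs X (Re a) x +v rs X (Im a) (iC *v x)).
  { intros a x. unfold rs. rewrite vscal_assoc, <- vscal_adds. f_equal.
    destruct a; apply C_ext; simpl; ring. }
  exists (fun x => mkC (f x) (- f (iC *v x))). split; [split; [|split]|].
  - intros x y. rewrite Fa, vscal_addv, Fa. apply C_ext; simpl; ring.
  - intros a x. rewrite (vscal_assoc X iC a x). rewrite (Hdec a x), (Hdec (Cmul iC a) x), !Fa, !Fr.
    destruct a as [p q]; apply C_ext; unfold iC; simpl; ring.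
  - exists 2. intro x. eapply Rle_trans; [apply Cabs_le_re_im|]. simpl.
    rewrite Rabs_Ropp. pose proof (Fabs x). pose proof (Fabs (iC *v x)).
    rewrite vnorm_scal in H0. unfold iC, Cabs in H0. simpl in H0.
    replace (0 * 0 + 1 * 1) with 1 in H0 by ring. rewrite sqrt_1 in H0. change (mkC 0 1) with iC in H0. lra.
  - intro E. injection E. intros _ E1. rewrite Fu in E1. apply Hu. apply vnorm_eq0. auto.
Qed.

End CHB.


Section Interp.
Variable X : CBanach.
Local Notation "0v" := (vzero X).
Local Notation "x +v y" := (vadd X x y) (at level 50, left associativity).
Local Notation "a *v x" := (vscal X a x) (at level 40, left associativity).
Local Notation nrm := (vnorm X).
Local Notation m1 := (Copp C1).

Lemma add_bounded (S T : op X) : bounded_op X S -> bounded_op X T -> bounded_op X (op_add X S T).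
Proof.
  intros [[Sa Ss] [M HM]] [[Ta Ts] [N HN]]. split; [split|]; unfold op_add.
  - intros. rewrite Sa, Ta, vadd_swap4. reflexivity.
  - intros. rewrite Ss, Ts, vscal_addv. reflexivity.
  - exists (Rabs M + Rabs N). intro x. eapply Rle_trans; [apply vnorm_triangle|].
    pose proof (HM x). pose proof (HN x). pose proof (vnorm_nonneg X x).
    pose proof (Rle_abs M). pose proof (Rle_abs N). nra.
Qed.

Lemma blf_0 h : blf X h -> h 0v = C0.
Proof. intros [_ [Hs _]]. rewrite <- (vscal_0s X 0v), Hs. ring. Qed.

Lemma rank1op_bounded (g : X -> C) w : blf X g -> bounded_op X (fun x => g x *v w).
Proof.
  intros [Ga [Gs [M HM]]]. split; [split|].
  - intros. rewrite Ga, vscal_adds. reflexivity.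
  - intros. rewrite Gs, vscal_assoc. reflexivity.
  - exists (Rabs M * nrm w). intro x. rewrite vnorm_scal.
    pose proof (HM x). pose proof (vnorm_nonneg X x). pose proof (vnorm_nonneg X w).
    pose proof (Rle_abs M). pose proof (Cabs_nonneg (g x)).
    apply Rle_trans with (M * nrm x * nrm w). { apply Rmult_le_compat_r; auto. }
    replace (Rabs M * nrm w * nrm x) with (Rabs M * nrm x * nrm w) by ring.
    apply Rmult_le_compat_r; auto. apply Rmult_le_compat_r; auto.
Qed.

Lemma blf_comp h (S : op X) : blf X h -> bounded_op X S -> blf X (fun x => h (S x)).
Proof.
  intros [Ha [Hs [M HM]]] [[Sa Ss] [N HN]]. split; [|split].
  - intros. rewrite Sa, Ha. auto.
  - intros. rewrite Ss, Hs. auto.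
  - exists (Rabs M * Rabs N). intro x. eapply Rle_trans; [apply HM|].
    pose proof (HN x). pose proof (vnorm_nonneg X x). pose proof (vnorm_nonneg X (S x)).
    pose proof (Rle_abs M). pose proof (Rle_abs N).
    apply Rle_trans with (Rabs M * nrm (S x)). { apply Rmult_le_compat_r; auto. }
    rewrite Rmult_assoc. apply Rmult_le_compat_l. apply Rabs_pos.
    eapply Rle_trans; [apply H|]. apply Rmult_le_compat_r; auto.
Qed.

Lemma blf_scal h c : blf X h -> blf X (fun x => Cmul c (h x)).
Proof.
  intros [Ha [Hs [M HM]]]. split; [|split].
  - intros. rewrite Ha. ring.
  - intros. rewrite Hs. ring.
  - exists (Cabs c * M). intro x. rewrite Cabs_mul, Rmult_assoc.
    apply Rmult_le_compat_l; [apply Cabs_nonneg|auto].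
Qed.

Lemma blf_add h1 h2 : blf X h1 -> blf X h2 -> blf X (fun x => Cadd (h1 x) (h2 x)).
Proof.
  intros [Ha [Hs [M HM]]] [Ha2 [Hs2 [N HN]]]. split; [|split].
  - intros. rewrite Ha, Ha2. ring.
  - intros. rewrite Hs, Hs2. ring.
  - exists (M + N). intro x. eapply Rle_trans; [apply Cabs_add|].
    pose proof (HM x); pose proof (HN x). lra.
Qed.

Lemma in_span_0 l : in_span X l 0v.
Proof.
  induction l; simpl; auto. exists C0, 0v. split; auto. rewrite vscal_0s, vadd_0. auto.
Qed.

Lemma in_span_add l x y : in_span X l x -> in_span X l y -> in_span X l (x +v y).
Proof.
  revert x y; induction l as [|v l IH]; simpl; intros x y.
  - intros -> ->. apply vadd_0.
  - intros [a [w [Hw ->]]] [b [w' [Hw' ->]]]. exists (Cadd a b), (w +v w'). split; auto.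
    rewrite vadd_swap4, vadd_scal_same. auto.
Qed.

Lemma in_span_scal l c x : in_span X l x -> in_span X l (c *v x).
Proof.
  revert x; induction l as [|v l IH]; simpl; intros x.
  - intros ->. apply vscal_0v.
  - intros [a [w [Hw ->]]]. exists (Cmul c a), (c *v w). split; auto.
    rewrite vscal_addv, vscal_assoc. auto.
Qed.

Lemma in_span_In l v : In v l -> in_span X l v.
Proof.
  induction l as [|w l IH]; simpl; [tauto|]. intros [->|H].
  - exists C1, 0v. split; [apply in_span_0|]. rewrite vscal_1, vadd_0. auto.
  - exists C0, v. split; auto. rewrite vscal_0s, vadd_0l. auto.
Qed.

Fixpoint indep (l : list X) : Prop :=
  match l with nil => True | v :: l' => ~ in_span X l' v /\ indep l' end.

Lemma sub_id (P : op X) x : P x = x -> x +v m1 *v P x = 0v.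
Proof. intro H. rewrite H, <- vopp_scal, vadd_opp. auto. Qed.

Lemma interp_gen l : indep l ->
  (exists P, bounded_op X P /\ (forall v, In v l -> P v = v) /\ (forall x, in_span X l (P x))) /\
  (forall t : X -> C, exists h, blf X h /\ forall v, In v l -> h v = t v).
Proof.
  induction l as [|v l IH]; simpl.
  - intros _. split.
    + exists (fun _ => 0v). split; [|split; [tauto|auto]].
      split; [split|]; intros; [rewrite vadd_0|rewrite vscal_0v|exists 0]; auto.
      intros. rewrite vnorm_0. lra.
    + intro t. exists (fun _ => C0). split; [|tauto].
      split; [|split]; intros; [ring|ring|exists 0]. intros. rewrite Cabs_C0. lra.
  - intros [Hv Hl]. destruct (IH Hl) as [[P [HP [HPl HPs]]] Hint].
    set (Q := op_add X (op_id X) (fun x => m1 *v P x)).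
    assert (HQ : bounded_op X Q) by (apply add_bounded; [apply id_bounded|apply scal_bounded; auto]).
    set (u := Q v).
    assert (Hu : u <> 0v).
    { intro E. apply Hv. assert (v = P v).
      { unfold u, Q, op_add, op_id in E. rewrite <- vopp_scal in E. apply vsub_eq0 in E. auto. }
      rewrite H. apply HPs. }
    destruct (complex_HB X u Hu) as [psi [Hpsi Hpu]].
    set (g := fun x => Cmul (Cinv (psi u)) (psi (Q x))).
    assert (Hg : blf X g) by (apply blf_scal, blf_comp; auto).
    assert (Hgv : g v = C1) by (unfold g; fold u; field; auto).
    assert (Hgl : forall w, In w l -> g w = C0).
    { intros w Hw. unfold g, Q, op_add, op_id. rewrite sub_id by auto. rewrite blf_0 by auto. ring. }
    split.
    + exists (op_add X P (fun x => g x *v u)). split; [|split].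
      * apply add_bounded; auto. apply rank1op_bounded; auto.
      * intros w [Ew|Hw]; unfold op_add.
        -- subst w. rewrite Hgv, vscal_1. unfold u, Q, op_add, op_id.
           rewrite <- vopp_scal, (vadd_comm X v), vadd_assoc, vadd_opp, vadd_0l.
           auto.
        -- rewrite Hgl, vscal_0s, vadd_0; auto.
      * intro x. unfold op_add. exists (g x), (P x +v (Cmul (g x) m1) *v P v). split.
        -- apply in_span_add; auto. apply in_span_scal; auto.
        -- unfold u, Q, op_add, op_id. rewrite vscal_addv, <- vscal_assoc.
           rewrite !vadd_assoc, (vadd_comm X (P x) (g x *v v)). auto.
    + intro t. destruct (Hint t) as [h0 [Hh0 Hh0l]].
      exists (fun x => Cadd (h0 (x +v (Cmul m1 (g x)) *v v)) (Cmul (t v) (g x))). split.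
      * apply blf_add; [|apply blf_scal; auto]. apply blf_comp; auto.
        apply add_bounded; [apply id_bounded|]. unfold op_id.
        assert (E : (fun x => Cmul m1 (g x) *v v) = (fun x => m1 *v (g x *v v))).
        { apply FunctionalExtensionality.functional_extensionality. intro. rewrite vscal_assoc. auto. }
        rewrite E. apply scal_bounded, rank1op_bounded; auto.
      * intros w [Ew|Hw].
        -- subst w. rewrite Hgv. replace (Cmul m1 C1) with m1 by ring. rewrite <- vopp_scal, vadd_opp, blf_0 by auto. ring.
        -- rewrite (Hgl w Hw). replace (Cmul m1 C0) with C0 by ring. rewrite vscal_0s, vadd_0, (Hh0l w Hw). ring.
Qed.

Lemma interp l t : indep l -> exists h, blf X h /\ forall v, In v l -> h v = t v.
Proof. intro H. apply (proj2 (interp_gen l H)). Qed.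

End Interp.


Fixpoint Cpow (a : C) (k : nat) : C := match k with O => C1 | S k => Cmul a (Cpow a k) end.

Lemma Cpow_trig t k : Cpow (mkC (cos t) (sin t)) k = mkC (cos (INR k * t)) (sin (INR k * t)).
Proof.
  induction k as [|k IH].
  - simpl. rewrite Rmult_0_l, cos_0, sin_0. reflexivity.
  - simpl Cpow. rewrite IH. rewrite S_INR.
    replace ((INR k + 1) * t) with (t + INR k * t) by ring.
    rewrite cos_plus, sin_plus. apply C_ext; simpl; ring.
Qed.

Lemma root_m1 n : (1 <= n)%nat -> exists w, Cpow w n = Copp C1.
Proof.
  intro Hn. exists (mkC (cos (PI / INR n)) (sin (PI / INR n))). rewrite Cpow_trig.
  replace (INR n * (PI / INR n)) with PI.
  - rewrite cos_PI, sin_PI. apply C_ext; simpl; ring.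
  - field. apply not_0_INR. lia.
Qed.

Lemma Csqrt_ex d : exists m, Cmul m m = d.
Proof.
  destruct d as [p q].
  set (m := sqrt (p * p + q * q)).
  assert (Hm0 : 0 <= m) by apply sqrt_pos.
  assert (Hmm : m * m = p * p + q * q) by (apply sqrt_sqrt; nra).
  assert (Hmp : Rabs p <= m).
  { unfold m. rewrite <- sqrt_Rsqr_abs. apply sqrt_le_1_alt. unfold Rsqr. nra. }
  assert (H1 : 0 <= (m + p) / 2) by (pose proof (Rle_abs p); pose proof (Rle_abs (-p)); rewrite Rabs_Ropp in *; lra).
  assert (H2 : 0 <= (m - p) / 2) by (pose proof (Rle_abs p); pose proof (Rle_abs (-p)); rewrite Rabs_Ropp in *; lra).
  set (a := sqrt ((m + p) / 2)). set (b := sqrt ((m - p) / 2)).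
  assert (Ha : a * a = (m + p) / 2) by (apply sqrt_sqrt; auto).
  assert (Hb : b * b = (m - p) / 2) by (apply sqrt_sqrt; auto).
  assert (Hab : a * b = Rabs q / 2).
  { unfold a, b. rewrite <- sqrt_mult_alt by auto.
    replace ((m + p) / 2 * ((m - p) / 2)) with (Rsqr (q / 2)).
    - rewrite sqrt_Rsqr_abs. unfold Rdiv. rewrite Rabs_mult, Rabs_inv, (Rabs_right 2); [auto|lra].
    - unfold Rsqr. replace ((m + p) / 2 * ((m - p) / 2)) with ((m * m - p * p) / 4) by field.
      rewrite Hmm. field. }
  destruct (Rle_dec 0 q) as [Hq|Hq].
  - exists (mkC a b). apply C_ext; simpl.
    + rewrite Ha, Hb. field.
    + rewrite Rabs_right in Hab by lra. lra.
  - exists (mkC a (- b)). apply C_ext; simpl.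
    + replace (a * a - - b * - b) with (a * a - b * b) by ring. rewrite Ha, Hb. field.
    + rewrite Rabs_left in Hab by lra. lra.
Qed.

Lemma Cabs_sq_eq a b : Cmul a a = Cmul b b -> Cabs a = Cabs b.
Proof.
  intro H. assert (E : Cabs a * Cabs a = Cabs b * Cabs b) by (rewrite <- !Cabs_mul, H; auto).
  pose proof (Cabs_nonneg a). pose proof (Cabs_nonneg b). nra.
Qed.


Section Core.
Variable X : CBanach.
Local Notation "0v" := (vzero X).
Local Notation "x +v y" := (vadd X x y) (at level 50, left associativity).
Local Notation "a *v x" := (vscal X a x) (at level 40, left associativity).
Local Notation nrm := (vnorm X).
Local Notation m1 := (Copp C1).

Lemma polyop5 (T : op X) d a0 a1 a2 a3 a4 z :
  linear X T -> (forall x, T (T (T (T x))) = d *v T (T x)) ->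
  a1 = C0 -> a3 = C0 -> Cadd a2 (Cmul a4 d) = C0 ->
  polyop X T (a0 :: a1 :: a2 :: a3 :: a4 :: nil) z = a0 *v z.
Proof.
  intros HT Hd -> -> Ha. simpl. rewrite lin_0, vadd_0 by auto. rewrite !vscal_0s, !vadd_0l.
  rewrite !(proj1 HT), !(proj2 HT), Hd, vscal_assoc, vadd_scal_same, Ha, vscal_0s, vadd_0. auto.
Qed.

Variable A : op X.
Hypothesis HA : bounded_op X A.
Variables w1 w2 : X.
Variables h1 h2 : X -> C.
Hypothesis Hh1 : blf X h1.
Hypothesis Hh2 : blf X h2.
Hypothesis H11 : h1 w1 = C1.
Hypothesis H12 : h1 w2 = C0.
Hypothesis H21 : h2 w1 = C0.
Hypothesis H22 : h2 w2 = C1.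
Variables r s : nat.
Variable om : C.
Hypothesis Hom : Cpow om (r + s) = m1.
Hypothesis Hn : (1 <= r + s)%nat.
Hypothesis Hkap : h1 (A w1) = h2 (A w2).
Let kap := h1 (A w1).
Let k12 := h1 (A w2).
Let k21 := h2 (A w1).
Let del := Csub (Cmul kap kap) (Cmul k12 k21).
Hypothesis Hdel : del <> C0.

Definition comb a b := a *v w1 +v b *v w2.
Definition Bop z := comb (h1 z) (Cmul om (h2 z)).

Lemma h1_comb a b : h1 (comb a b) = a.
Proof. unfold comb. destruct Hh1 as [Ha [Hs _]]. rewrite Ha, !Hs, H11, H12. ring. Qed.
Lemma h2_comb a b : h2 (comb a b) = b.
Proof. unfold comb. destruct Hh2 as [Ha [Hs _]]. rewrite Ha, !Hs, H21, H22. ring. Qed.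

Lemma comb_scal c a b : c *v comb a b = comb (Cmul c a) (Cmul c b).
Proof. unfold comb. rewrite vscal_addv, !vscal_assoc. auto. Qed.

Lemma comb_eq0 a b : comb a b = 0v -> a = C0 /\ b = C0.
Proof.
  intro E. split.
  - rewrite <- (h1_comb a b), E. apply blf_0; auto.
  - rewrite <- (h2_comb a b), E. apply blf_0; auto.
Qed.

Lemma B_bounded : bounded_op X Bop.
Proof.
  unfold Bop, comb. apply (add_bounded X (fun z => h1 z *v w1) (fun z => Cmul om (h2 z) *v w2)).
  - apply rank1op_bounded; auto.
  - apply rank1op_bounded. apply blf_scal; auto.
Qed.

Lemma B_rank : rank_le X 2 Bop.
Proof.
  exists (w1 :: w2 :: nil). split; auto. intro z. simpl.
  exists (h1 z), (Cmul om (h2 z) *v w2). split; auto.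
  exists (Cmul om (h2 z)), 0v. split; auto. symmetry; apply vadd_0.
Qed.

Lemma Bpow_comb k a b : op_pow X Bop k (comb a b) = comb a (Cmul (Cpow om k) b).
Proof.
  unfold op_pow. induction k as [|k IH].
  - simpl. f_equal. ring.
  - rewrite Nat.iter_succ, IH. unfold Bop. rewrite h1_comb, h2_comb. simpl. f_equal. ring.
Qed.

Lemma Bop_comb z : Bop z = comb (h1 z) (Cmul om (h2 z)).
Proof. reflexivity. Qed.

Lemma Bpow_S k z : op_pow X Bop (S k) z = comb (h1 z) (Cmul (Cpow om (S k)) (h2 z)).
Proof.
  unfold op_pow. rewrite Nat.iter_succ_r. fold (op_pow X Bop k (Bop z)).
  rewrite Bop_comb, Bpow_comb. simpl. f_equal. ring.
Qed.

Definition J z := comb (h1 z) (Copp (h2 z)).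

Lemma pow_sr z : op_pow X Bop s (op_pow X Bop r z) = J z.
Proof.
  unfold op_pow. rewrite <- Nat.iter_add. fold (op_pow X Bop (s + r) z).
  rewrite Nat.add_comm. destruct (r + s)%nat as [|m] eqn:E; [lia|].
  rewrite Bpow_S. rewrite Hom. unfold J. f_equal. ring.
Qed.

Definition Phi z := J (A z).

Lemma A_comb a b : A (comb a b) = a *v A w1 +v b *v A w2.
Proof. unfold comb. apply lin_comb. apply HA. Qed.

Lemma Phi_comb a b : Phi (comb a b) =
  comb (Cadd (Cmul a kap) (Cmul b k12)) (Copp (Cadd (Cmul a k21) (Cmul b kap))).
Proof.
  unfold Phi, J. rewrite A_comb.
  destruct Hh1 as [Ha1 [Hs1 _]], Hh2 as [Ha2 [Hs2 _]].
  rewrite Ha1, Ha2, !Hs1, !Hs2. unfold kap, k12, k21. rewrite <- Hkap. auto.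
Qed.

Lemma Phi_J z : Phi z = comb (h1 (A z)) (Copp (h2 (A z))).
Proof. reflexivity. Qed.

Lemma Phi3 z : Phi (Phi (Phi z)) = del *v Phi z.
Proof.
  rewrite (Phi_J z). rewrite !Phi_comb, comb_scal. unfold del. f_equal; ring.
Qed.

Definition T z := op_pow X Bop r (A (op_pow X Bop s z)).

Lemma T_eq : T = op_comp X (op_pow X Bop r) (op_comp X A (op_pow X Bop s)).
Proof. reflexivity. Qed.

Lemma T_bounded : bounded_op X T.
Proof.
  rewrite T_eq. apply comp_bounded; [apply pow_bounded, B_bounded|].
  apply comp_bounded; auto. apply pow_bounded, B_bounded.
Qed.

Lemma Lr : linear X (op_pow X Bop r).
Proof. apply pow_bounded, B_bounded. Qed.

Lemma TT x : T (T x) = op_pow X Bop r (A (Phi (op_pow X Bop s x))).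
Proof. unfold T. rewrite pow_sr. reflexivity. Qed.

Lemma T4 x : T (T (T (T x))) = del *v T (T x).
Proof.
  rewrite (TT (T (T x))), TT, pow_sr. fold (Phi (Phi (op_pow X Bop s x))).
  rewrite Phi3. rewrite (proj2 (proj1 HA)), (proj2 Lr). reflexivity.
Qed.

Lemma spec_sub lam : spectrum X T lam -> lam = C0 \/ Cmul lam lam = del.
Proof.
  intro Hl. destruct (classic (lam = C0)) as [|H0]; [left; auto|].
  destruct (classic (Cmul lam lam = del)) as [|H1]; [right; auto|].
  exfalso. revert Hl.
  set (lam2 := Cmul lam lam).
  assert (Hd : Cmul lam2 (Csub lam2 del) <> C0).
  { apply Cmul_neq0; [apply Cmul_neq0; auto|].
    intro E. apply H1. fold lam2. replace lam2 with (Cadd (Csub lam2 del) del) by ring. rewrite E. ring. }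
  apply (not_spectrum_poly X T lam (Cmul lam2 (Csub lam2 del))
     (Csub (Cmul lam lam2) (Cmul del lam) :: Csub lam2 del :: lam :: C1 :: nil)); auto.
  - apply T_bounded.
  - intro z. cbn [pmul padd pscal map]. rewrite (polyop5 T del); [f_equal; unfold lam2; ring | first [apply (proj1 T_bounded) | exact T4 | (unfold lam2; ring)] ..].
  - intro z. cbn [pmul padd pscal map]. rewrite (polyop5 T del); [f_equal; unfold lam2; ring | first [apply (proj1 T_bounded) | exact T4 | (unfold lam2; ring)] ..].
Qed.

Lemma eigen_E lam p q : Cmul lam lam = del -> lam <> C0 ->
  Cadd (Cmul p kap) (Cmul q k12) = Cmul lam p ->
  Copp (Cadd (Cmul p k21) (Cmul q kap)) = Cmul lam q ->
  ~ (p = C0 /\ q = C0) -> spectrum X T lam.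
Proof.
  intros Hl Hl0 E1 E2 Hpq.
  set (z := comb p q).
  assert (HPz : Phi z = lam *v z) by (unfold z; rewrite Phi_comb, E1, E2, comb_scal; auto).
  apply (eigen_spectrum X T lam (op_pow X Bop r (A z))).
  - intro E. apply Hpq. apply comb_eq0. fold z.
    assert (E' : op_pow X Bop s (op_pow X Bop r (A z)) = lam *v z) by (rewrite pow_sr; exact HPz).
    rewrite E in E'. rewrite lin_0 in E' by (apply pow_bounded, B_bounded).
    symmetry in E'. destruct (vscal_eq0 X _ _ E') as [|]; [contradiction|auto].
  - unfold T. rewrite pow_sr. fold (Phi z). rewrite HPz, (proj2 (proj1 HA)), (proj2 Lr). auto.
Qed.

Lemma eigen_lam lam : Cmul lam lam = del -> spectrum X T lam.
Proof.
  intro Hl. assert (Hl0 : lam <> C0).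
  { intro E. apply Hdel. rewrite <- Hl, E. ring. }
  destruct (classic (Cadd kap lam = C0 /\ k21 = C0)) as [[Ea Eb]|Hne].
  - apply (eigen_E lam k12 (Csub lam kap)); auto.
    + unfold del in Hl. rewrite Eb in Hl. ring.
    + unfold del in Hl. rewrite Eb in *. assert (kap = Copp lam) by (replace kap with (Csub (Cadd kap lam) lam) by ring; rewrite Ea; ring).
      rewrite H. ring.
    + intros [E1 E2]. apply Hl0.
      assert (kap = Copp lam) by (replace kap with (Csub (Cadd kap lam) lam) by ring; rewrite Ea; ring).
      assert (kap = lam) by (replace kap with (Csub lam (Csub lam kap)) by ring; rewrite E2; ring).
      assert (E : Cadd lam lam = C0) by (rewrite <- H0 at 1; rewrite H; ring).
      replace lam with (Cmul (Cinv (Cadd C1 C1)) (Cadd lam lam)) by (field; intro F; injection F; lra).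
      rewrite E. ring.
  - apply (eigen_E lam (Cadd kap lam) (Copp k21)); auto.
    + transitivity (Cadd del (Cmul lam kap)); [unfold del; ring| rewrite <- Hl; ring].
    + ring.
    + intros [E1 E2]. apply Hne. split; auto. replace k21 with (Copp (Copp k21)) by ring. rewrite E2. ring.
Qed.

Lemma core_not_singleton : ~ is_singleton (peripheral_spectrum X T).
Proof.
  destruct (Csqrt_ex del) as [mu Hmu].
  assert (Hmu0 : mu <> C0) by (intro E; apply Hdel; rewrite <- Hmu, E; ring).
  assert (Hrad : is_spectral_radius X T (Cabs mu)).
  { split.
    - intros t [lam [Hl ->]]. destruct (spec_sub lam Hl) as [->|E].
      + rewrite Cabs_C0. apply Cabs_nonneg.
      + right. apply Cabs_sq_eq. rewrite E, Hmu. auto.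
    - intros b Hb. apply Hb. exists mu. split; auto. apply eigen_lam; auto. }
  intros [z Hz].
  assert (P1 : peripheral_spectrum X T mu) by (split; [apply eigen_lam; auto|auto]).
  assert (P2 : peripheral_spectrum X T (Copp mu)).
  { split.
    - apply eigen_lam. rewrite <- Hmu. ring.
    - replace (Cabs (Copp mu)) with (Cabs mu); auto. rewrite Cabs_opp. auto. }
  apply Hz in P1. apply Hz in P2. apply Hmu0.
  assert (E0 : mu = Copp mu) by congruence.
  assert (E : Cadd mu mu = C0) by (transitivity (Cadd mu (Copp mu)); [f_equal; exact E0| ring]).
  replace mu with (Cmul (Cinv (Cadd C1 C1)) (Cadd mu mu)) by (field; intro F; injection F; lra).
  rewrite E. ring.
Qed.

End Core.


Section Cases.
Variable X : CBanach.
Local Notation "0v" := (vzero X).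
Local Notation "x +v y" := (vadd X x y) (at level 50, left associativity).
Local Notation "a *v x" := (vscal X a x) (at level 40, left associativity).
Local Notation m1 := (Copp C1).

Fixpoint lookup (v : X) (l : list (X * C)) : C :=
  match l with
  | nil => C0
  | (k, c) :: l' => if excluded_middle_informative (v = k) then c else lookup v l'
  end.

Lemma indep_nodup l : indep X l -> NoDup l.
Proof.
  induction l as [|v l IH]; simpl; intros; [constructor|].
  destruct H as [H1 H2]. constructor; auto. intro Hin. apply H1. apply in_span_In; auto.
Qed.

Lemma lookup_ok l k c : NoDup (map fst l) -> In (k, c) l -> lookup k l = c.
Proof.
  induction l as [|[k' c'] l IH]; simpl; [tauto|].
  intros Hnd [E|Hin]; inversion Hnd; subst.
  - injection E; intros; subst. destruct (excluded_middle_informative (k = k)); [auto|congruence].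
  - destruct (excluded_middle_informative (k = k')) as [->|]; [|auto].
    exfalso. apply H1. change k' with (fst (k', c)). apply in_map; auto.
Qed.

Lemma interp_list (l : list (X * C)) : indep X (map fst l) ->
  exists h, blf X h /\ forall k c, In (k, c) l -> h k = c.
Proof.
  intro Hi. destruct (interp X (map fst l) (fun v => lookup v l) Hi) as [h [Hh Hv]].
  exists h. split; auto. intros k c Hin. rewrite Hv.
  - apply lookup_ok; auto. apply indep_nodup; auto.
  - change k with (fst (k, c)). apply in_map; auto.
Qed.

Definition good_data (A : op X) := exists w1 w2 h1 h2, blf X h1 /\ blf X h2 /\
  h1 w1 = C1 /\ h1 w2 = C0 /\ h2 w1 = C0 /\ h2 w2 = C1 /\ h1 (A w1) = h2 (A w2) /\
  Csub (Cmul (h1 (A w1)) (h1 (A w1))) (Cmul (h1 (A w2)) (h2 (A w1))) <> C0.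

Lemma blf_comb h a b x y : blf X h -> h (a *v x +v b *v y) = Cadd (Cmul a (h x)) (Cmul b (h y)).
Proof. intros [Ha [Hs _]]. rewrite Ha, !Hs. auto. Qed.

Lemma indep2 u v a b : indep X (u :: v :: nil) -> a *v u +v b *v v = 0v -> a = C0 /\ b = C0.
Proof.
  intros [Hu [Hv _]] E. simpl in Hv.
  destruct (classic (a = C0)) as [Ha|Ha].
  - subst. rewrite vscal_0s, vadd_0l in E. split; auto.
    destruct (vscal_eq0 X _ _ E); [auto|contradiction].
  - exfalso. apply Hu. exists (Cmul (Copp (Cinv a)) b), 0v. split; [simpl; auto|].
    rewrite vadd_0. apply (vscal_inj X a); auto. rewrite vscal_assoc.
    replace (Cmul a (Cmul (Copp (Cinv a)) b)) with (Copp b) by (field; auto).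
    apply (vadd_cancel X (b *v v)). rewrite (vadd_comm X (b *v v) (a *v u)), E, vadd_scal_same.
    replace (Cadd b (Copp b)) with C0 by ring. rewrite vscal_0s. auto.
Qed.

Variable A : op X.
Hypothesis HA : bounded_op X A.
Let LA : linear X A := proj1 HA.

Definition case1 x := indep X (A (A x) :: A x :: x :: nil).
Definition case2 x := indep X (A x :: x :: nil) /\ exists al be, al <> C0 /\ A (A x) = al *v x +v be *v A x.

Lemma local_trich x : case1 x \/ case2 x \/ exists be, A (A x) = be *v A x.
Proof.
  destruct (classic (indep X (A x :: x :: nil))) as [Hi|Hi].
  - destruct (classic (in_span X (A x :: x :: nil) (A (A x)))) as [Hs|Hs].
    + destruct Hs as [a [w [[b [w' [Hw' ->]]] E]]]. simpl in Hw'. subst.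
      rewrite vadd_0 in E.
      destruct (classic (b = C0)) as [->|Hb].
      * right; right. exists a. rewrite E, vscal_0s, vadd_0. auto.
      * right; left. split; auto. exists b, a. split; auto. rewrite E, vadd_comm. auto.
    + left. split; auto.
  - right; right. simpl in Hi.
    destruct (classic (in_span X (x :: nil) (A x))) as [Hs|Hs].
    + destruct (span1_inv X _ _ Hs) as [c Hc]. exists c. rewrite Hc at 1. rewrite (proj2 LA). auto.
    + assert (x = 0v) by tauto. subst. exists C0. rewrite !lin_0 by auto. rewrite vscal_0v. auto.
Qed.

Lemma case1_good x : case1 x -> good_data A.
Proof.
  intro H.
  destruct (interp_list ((A (A x), m1) :: (A x, C0) :: (x, C1) :: nil)) as [h1 [Hh1 V1]]; [exact H|].
  destruct (interp_list ((A (A x), C0) :: (A x, C1) :: (x, C0) :: nil)) as [h2 [Hh2 V2]]; [exact H|].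
  exists x, (A x), h1, h2. split; [exact Hh1|]. split; [exact Hh2|]. repeat split.
  - apply V1; simpl; auto.
  - apply V1; simpl; auto.
  - apply V2; simpl; auto.
  - apply V2; simpl; auto.
  - rewrite (V1 (A x) C0), (V2 (A (A x)) C0) by (simpl; auto). auto.
  - rewrite (V1 (A x) C0), (V1 (A (A x)) m1), (V2 (A x) C1) by (simpl; auto). intro E.
    assert (E' : C1 = C0) by (rewrite <- E; ring). exact (C1_neq_C0 E').
Qed.

Lemma half_ex : exists hf : C, Cmul hf (Cadd C1 C1) = C1.
Proof. exists (Cinv (Cadd C1 C1)). field. intro F; injection F; lra. Qed.

Lemma two_neq0 : Cadd C1 C1 <> C0.
Proof. intro F; injection F; lra. Qed.

Lemma case2_good x : case2 x -> good_data A.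
Proof.
  intros [Hi [al [be [Hal E]]]].
  set (bh := Cmul be (Cinv (Cadd C1 C1))).
  destruct (interp_list ((A x, bh) :: (x, C1) :: nil)) as [h1 [Hh1 V1]]; [exact Hi|].
  destruct (interp_list ((A x, C1) :: (x, C0) :: nil)) as [h2 [Hh2 V2]]; [exact Hi|].
  assert (a1 : h1 (A x) = bh) by (apply V1; simpl; auto).
  assert (a2 : h1 x = C1) by (apply V1; simpl; auto).
  assert (b1 : h2 (A x) = C1) by (apply V2; simpl; auto).
  assert (b2 : h2 x = C0) by (apply V2; simpl; auto).
  set (w2 := C1 *v A x +v Copp bh *v x).
  assert (Aw2 : A w2 = C1 *v A (A x) +v Copp bh *v A x) by (unfold w2; apply lin_comb; auto).
  exists x, w2, h1, h2. split; [exact Hh1|]. split; [exact Hh2|]. repeat split.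
  - exact a2.
  - unfold w2. rewrite blf_comb, a1, a2 by auto. ring.
  - exact b2.
  - unfold w2. rewrite blf_comb, b1, b2 by auto. ring.
  - rewrite Aw2, blf_comb, E, blf_comb, b1, b2, a1 by auto.
    unfold bh. field. apply two_neq0.
  - rewrite Aw2, !blf_comb, E, !blf_comb, a1, a2, b1 by auto.
    intro F. apply Hal.
    replace al with (Copp (Csub (Cmul bh bh)
       (Cmul (Cadd (Cmul C1 (Cadd (Cmul al C1) (Cmul be bh))) (Cmul (Copp bh) bh)) C1))).
    + rewrite F. ring.
    + unfold bh. field. apply two_neq0.
Qed.

Lemma span_A0 l x : (forall v, In v l -> A v = 0v) -> in_span X l x -> A x = 0v.
Proof.
  revert x; induction l as [|v l IH]; simpl; intros x Hl.
  - intros ->. apply lin_0; auto.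
  - intros [a [w [Hw ->]]]. rewrite (proj1 LA), (proj2 LA), Hl, IH; auto.
    rewrite vscal_0v, vadd_0. auto.
Qed.

Lemma case3_good : (forall x, exists be, A (A x) = be *v A x) -> op_nonzero X A -> ~ rank_le X 1 A ->
  good_data A.
Proof.
  intros H [x2 Hx2] Hr.
  set (y2 := A x2) in *.
  assert (Hx1 : exists x1, ~ in_span X (y2 :: nil) (A x1)).
  { apply NNPP. intro Hn. apply Hr. exists (y2 :: nil). split; auto. intro x.
    apply NNPP. intro Hx. apply Hn. eauto. }
  destruct Hx1 as [x1 Hx1]. set (y1 := A x1) in *.
  assert (Hi : indep X (y1 :: y2 :: nil)) by (simpl; tauto).
  destruct (H x1) as [b1 E1], (H x2) as [b2 E2], (H (x1 +v x2)) as [b3 E3].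
  fold y1 in E1. fold y2 in E2.
  rewrite (proj1 LA) in E3. fold y1 y2 in E3. rewrite (proj1 LA), E1, E2 in E3.
  assert (Hz : Csub b1 b3 *v y1 +v Csub b2 b3 *v y2 = 0v).
  { unfold Csub. rewrite !vscal_adds, vadd_swap4, E3.
    rewrite <- (vscal_addv X (Copp b3)), vadd_scal_same.
    replace (Cadd b3 (Copp b3)) with C0 by ring. apply vscal_0s. }
  destruct (indep2 _ _ _ _ Hi Hz) as [F1 F2].
  assert (Eb : b2 = b1).
  { replace b2 with (Cadd (Csub b2 b3) b3) by ring. replace b1 with (Cadd (Csub b1 b3) b3) by ring.
    rewrite F1, F2. auto. }
  rewrite Eb in E2. clear Eb E3 Hz F1 F2 b2 b3.
  destruct (classic (b1 = C0)) as [Hb|Hb].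
  - subst b1. rewrite vscal_0s in E1, E2.
    assert (Hi4 : indep X (x1 :: x2 :: y1 :: y2 :: nil)).
    { split; [|split; [|exact Hi]].
      - intros [a [w [Hw Ex]]]. apply Hx1. exists a, 0v. split; [simpl; auto|].
        rewrite vadd_0. fold y1. unfold y1. rewrite Ex, (proj1 LA), (proj2 LA).
        rewrite (span_A0 (y1 :: y2 :: nil) w); auto.
        + rewrite vadd_0. auto.
        + intros v [<-|[<-|[]]]; auto.
      - intro Hs. apply Hx2. unfold y2.
        apply (span_A0 (y1 :: y2 :: nil)); auto. intros v [<-|[<-|[]]]; auto. }
    destruct (interp_list ((x1, C1) :: (x2, C0) :: (y1, C1) :: (y2, C0) :: nil)) as [h1 [Hh1 V1]]; [exact Hi4|].
    destruct (interp_list ((x1, C0) :: (x2, C1) :: (y1, C0) :: (y2, C1) :: nil)) as [h2 [Hh2 V2]]; [exact Hi4|].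
    exists x1, x2, h1, h2. split; [exact Hh1|]. split; [exact Hh2|]. repeat split.
    + apply V1; simpl; auto.
    + apply V1; simpl; tauto.
    + apply V2; simpl; auto.
    + apply V2; simpl; tauto.
    + fold y1 y2. rewrite (V1 y1 C1), (V2 y2 C1) by (simpl; tauto). auto.
    + fold y1 y2. rewrite (V1 y1 C1), (V1 y2 C0), (V2 y1 C0) by (simpl; tauto).
      intro F. apply C1_neq_C0. rewrite <- F. ring.
  - destruct (interp_list ((y1, C1) :: (y2, C0) :: nil)) as [h1 [Hh1 V1]]; [exact Hi|].
    destruct (interp_list ((y1, C0) :: (y2, C1) :: nil)) as [h2 [Hh2 V2]]; [exact Hi|].
    assert (a1 : h1 y1 = C1) by (apply V1; simpl; auto).
    assert (a2 : h1 y2 = C0) by (apply V1; simpl; auto).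
    assert (c1 : h2 y1 = C0) by (apply V2; simpl; auto).
    assert (c2 : h2 y2 = C1) by (apply V2; simpl; auto).
    exists y1, y2, h1, h2. split; [exact Hh1|]. split; [exact Hh2|]. repeat split; auto.
    + rewrite E1, E2, (proj1 (proj2 Hh1)), (proj1 (proj2 Hh2)), a1, c2. auto.
    + rewrite E1, E2, !(proj1 (proj2 Hh1)), !(proj1 (proj2 Hh2)), a1, a2, c1.
      intro F. apply Hb. replace (Csub (Cmul (Cmul b1 C1) (Cmul b1 C1)) (Cmul (Cmul b1 C0) (Cmul b1 C0)))
        with (Cmul b1 b1) in F by ring. destruct (Cmul_eq0 _ _ F); auto.
Qed.

Lemma good_from_rank : op_nonzero X A -> ~ rank_le X 1 A -> good_data A.
Proof.
  intros Hnz Hr.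
  destruct (classic (exists x, case1 x)) as [[x Hx]|N1]; [eapply case1_good; eauto|].
  destruct (classic (exists x, case2 x)) as [[x Hx]|N2]; [eapply case2_good; eauto|].
  apply case3_good; auto. intro x.
  destruct (local_trich x) as [H|[H|H]]; auto; exfalso; eauto.
Qed.

End Cases.


Theorem lemma2p3 (X : CBanach) (Aalg : op X -> Prop) (r s : nat) (A : op X) :
  dim_ge2 X ->
  standard_operator_algebra X Aalg ->
  (1 <= r + s)%nat ->
  Aalg A ->
  op_nonzero X A ->
  (rank_one X A <->
     (forall B, Aalg B ->
        is_singleton (peripheral_spectrum X
          (op_comp X (op_pow X B r) (op_comp X A (op_pow X B s)))))) /\
  (rank_one X A <->
     (forall B, Aalg B -> rank_le X 2 B ->
        is_singleton (peripheral_spectrum X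
          (op_comp X (op_pow X B r) (op_comp X A (op_pow X B s)))))).
Proof.
  intros Hd [Hbd [_ [_ [_ Hfin]]]] Hrs HAA Hnz.
  assert (HA : bounded_op X A) by auto.
  assert (D12 : rank_one X A -> forall B, Aalg B ->
        is_singleton (peripheral_spectrum X
          (op_comp X (op_pow X B r) (op_comp X A (op_pow X B s))))).
  { intros [[ys [Hlen Hys]] _] B HB.
    destruct ys as [|y [|]]; simpl in Hlen; try discriminate.
    assert (HBb : bounded_op X B) by auto.
    apply (rank1_periph X _ (op_pow X B r y) Hd).
    - apply comp_bounded; [apply pow_bounded; auto|]. apply comp_bounded; auto. apply pow_bounded; auto.
    - intro x. unfold op_comp. apply span1_lin; [apply pow_bounded; auto|]. apply Hys. }
  assert (D31 : (forall B, Aalg B -> rank_le X 2 B ->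
        is_singleton (peripheral_spectrum X
          (op_comp X (op_pow X B r) (op_comp X A (op_pow X B s))))) -> rank_one X A).
  { intro Hall. destruct (Classical_Prop.classic (rank_le X 1 A)) as [H1|H1]; [split; auto|].
    exfalso.
    destruct (good_from_rank X A HA Hnz H1) as [w1 [w2 [h1 [h2 [Hh1 [Hh2 [E11 [E12 [E21 [E22 [Hk Hdl]]]]]]]]]]].
    destruct (root_m1 (r + s) Hrs) as [om Hom].
    apply (core_not_singleton X A HA w1 w2 h1 h2 Hh1 Hh2 E11 E12 E21 E22 r s om Hom Hrs Hk Hdl).
    apply Hall.
    - apply Hfin. split; [apply B_bounded; auto|]. exists 2%nat. apply B_rank.
    - apply B_rank. }
  split; split; auto.
Qed.
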